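(* Let $\mathcal{A}$ be a separating union-closed family with base set $[n]$ and height $h=4$, and let $\mathcal{B}=\{B_1,B_2,B_3,B_4\}$ be a choice of $\mathcal{B}(\mathcal{A})$ with $|\mathcal{B}|=4$. Then $|\mathrm{irr}_{\mathcal{B}}(B_i)|=1$ for each $i \in \{1,2,3,4\}$.
   Context: A family of sets $\mathcal{A}$ is union-closed if it is a finite family of distinct finite sets with at least one nonempty member set, and $X,Y\in\mathcal{A}$ implies $X\cup Y\in\mathcal{A}$ (the empty set may be a member). For a family $\mathcal{F}$, $b(\mathcal{F})=\bigcup_{F\in\mathcal{F}}F$; the base set $b(\mathcal{A})$ is denoted $[n]=\{1,\dots,n\}$. $\mathcal{A}$ is separating if for any two distinct $x,y\in[n]$ there is $A\in\mathcal{A}$ containing exactly one of $x,y$. A chain in $\mathcal{A}$ is a subfamily any two distinct members of which are comparable under proper inclusion; the height $h$ of $\mathcal{A}$ is the maximum size of a chain in $\mathcal{A}$. For real $x\ge 0$, $\mathcal{A}_{<x}=\{A\in\mathcal{A} : |A|<x\}$. For $\mathcal{S}\subseteq\mathcal{A}$ and $S\in\mathcal{S}$, $\mathrm{irr}_{\mathcal{S}}(S)=\{s\in S : s\notin b(\mathcal{S}\setminus\{S\})\}$, and $\mathcal{S}$ is irredundant if $\mathrm{irr}_{\mathcal{S}}(S)\neq\emptyset$ for every $S\in\mathcal{S}$. With $B=b(\mathcal{A}_{<n/2})$, $\mathcal{B}(\mathcal{A})$ denotes any irredundant subfamily of $\mathcal{A}_{<n/2}$ of minimum size such that $b(\mathcal{B}(\mathcal{A}))=B$.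 *)

(* Defs.v *)
From mathcomp Require Import all_boot.
Set Implicit Arguments. Unset Strict Implicit. Unset Printing Implicit Defensive.

(* Families of subsets of the base set [n], modelled as 'I_n = {0,...,n-1}. *)
Section Fam.
Variable n : nat.
Notation fam := {set {set 'I_n}}.

Definition famU (F : fam) : {set 'I_n} := \bigcup_(X in F) X.

Definition union_closed (A : fam) : Prop :=
  (exists2 X, X \in A & X != set0) /\
  (forall X Y, X \in A -> Y \in A -> X :|: Y \in A).

Definition separating (A : fam) : Prop :=
  forall x y : 'I_n, x != y ->
    exists2 X, X \in A & (x \in X) != (y \in X).

Definition is_chain (C : fam) : bool :=
  [forall X in C, [forall Y in C, (X \subset Y) || (Y \subset X)]].

Definition height (A : fam) : nat :=
  \max_(C in powerset A | is_chain C) #|C|.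

(* A_{<x} with x = n/2 : members of size < n/2, i.e. 2|X| < n *)
Definition small_half (A : fam) : fam := [set X in A | (2 * #|X| < n)%N].

Definition irr (S : fam) (X : {set 'I_n}) : {set 'I_n} :=
  X :\: famU (S :\ X).

Definition irredundant (S : fam) : Prop :=
  forall X, X \in S -> irr S X != set0.

Definition is_calB (A B : fam) : Prop :=
  [/\ B \subset small_half A,
      irredundant B,
      famU B = famU (small_half A) &
      forall C : fam, C \subset small_half A -> irredundant C ->
        famU C = famU (small_half A) -> (#|B| <= #|C|)%N].
End Fam.

(* Main.v *)
Require Import Defs.
From mathcomp Require Import all_boot.
Set Implicit Arguments. Unset Strict Implicit.

Section H.
Variable n : nat.
Implicit Types (S : {set {set 'I_n}}) (X Y : {set 'I_n}).

Lemma irr_notin S X Y a : a \in irr S X -> Y \in S -> Y != X -> a \notin Y.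
Proof.
rewrite /irr inE => /andP [Ha _] YS YX; apply/negP => aY; move: Ha.
by rewrite /famU; move/bigcupP; apply; exists Y => //; rewrite !inE YX.
Qed.

Lemma irr_in S X a : a \in irr S X -> a \in X.
Proof. by rewrite /irr inE => /andP []. Qed.

Lemma chain_seq (s : seq {set 'I_n}) :
  sorted (fun X Y => X \proper Y) s ->
  is_chain [set x in s] /\ #|[set x in s]| = size s.
Proof.
move=> so; split; last first.
  rewrite cardsE; apply/card_uniqP.
  move: so; apply: sorted_uniq; first by move=> y x z; exact: proper_trans.
  by move=> X; exact: negbTE (proper_irrefl X).
have : pairwise (fun X Y => X \proper Y) s.
  by rewrite -sorted_pairwise // => y x z; exact: proper_trans.
move=> pw; apply/forallP => X; apply/implyP; rewrite inE => Xs.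
apply/forallP => Y; apply/implyP; rewrite inE => Ys.
elim: s pw Xs Ys {so} => [//|z s IH] /= /andP [/allP az pw].
rewrite !inE => /orP [/eqP ->|Xs] /orP [/eqP ->|Ys].
- by rewrite subxx.
- by rewrite (proper_sub (az _ Ys)).
- by rewrite (proper_sub (az _ Xs)) orbT.
- exact: IH.
Qed.
End H.

Theorem propositionK (n : nat) (A B : {set {set 'I_n}}) :
  union_closed A ->
  famU A = [set: 'I_n] ->
  separating A ->
  height A = 4 ->
  is_calB A B ->
  #|B| = 4 ->
  forall X, X \in B -> #|irr B X| = 1.
Proof.
move=> [_ UC] UA sep hA [BA irrB _ _] cB X XB.
have BinA : forall Y, Y \in B -> Y \in A.
  by move=> Y /(subsetP BA); rewrite inE => /andP [].
have : 0 < #|irr B X| by rewrite card_gt0 irrB.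
rewrite leq_eqVlt => /orP [/eqP <- //|].
move/card_gt1P => [x [y [xI yI xy]]].
have : 2 < #|B :\ X| by move: cB; rewrite (cardsD1 X) XB add1n => -[->].
move/card_gt2P => [P [Q [R [[PB QB RB] [PQ QR RP]]]]].
move: PB QB RB; rewrite !inE => /andP [PX PB] /andP [QX QB] /andP [RX RB].
have [q qI] : exists q, q \in irr B Q by apply/set0Pn; apply: irrB.
have [r rI] : exists r, r \in irr B R by apply/set0Pn; apply: irrB.
have [Z ZA xyZ] := sep x y xy.
have [u [v [uZ vZ uI vI]]] : exists u v, [/\ u \in Z, v \notin Z,
    u \in irr B X & v \in irr B X].
  move: xyZ; case: (boolP (x \in Z)) => xZ; case: (boolP (y \in Z)) => yZ //= _.
    by exists x, y.
  by exists y, x.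
have [W WA vW] : exists2 W, W \in A & v \in W.
  have : v \in famU A by rewrite UA inE.
  by move/bigcupP => [W WA vW]; exists W.
have nP : forall a Y, a \in irr B Y -> Y \in B -> Y != P -> a \notin P.
  by move=> a Y aI YB YP; apply: (irr_notin aI PB); rewrite eq_sym.
have nQ : forall a Y, a \in irr B Y -> Y \in B -> Y != Q -> a \notin Q.
  by move=> a Y aI YB YP; apply: (irr_notin aI QB); rewrite eq_sym.
have nR : forall a Y, a \in irr B Y -> Y \in B -> Y != R -> a \notin R.
  by move=> a Y aI YB YP; apply: (irr_notin aI RB); rewrite eq_sym.
have qQ := irr_in qI; have rR := irr_in rI.
have uP := nP _ _ uI XB ltac:(by rewrite eq_sym PX).
have uQ := nQ _ _ uI XB ltac:(by rewrite eq_sym QX).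
have uR := nR _ _ uI XB ltac:(by rewrite eq_sym RX).
have vP := nP _ _ vI XB ltac:(by rewrite eq_sym PX).
have vQ := nQ _ _ vI XB ltac:(by rewrite eq_sym QX).
have vR := nR _ _ vI XB ltac:(by rewrite eq_sym RX).
have qP := nP _ _ qI QB ltac:(by rewrite eq_sym PQ).
have rP := nP _ _ rI RB RP.
have rQ := nQ _ _ rI RB ltac:(by rewrite eq_sym QR).
set s := [:: P; P :|: Q; P :|: Q :|: R; P :|: Q :|: R :|: Z;
             P :|: Q :|: R :|: Z :|: W].
have so : sorted (fun X0 Y0 : {set 'I_n} => X0 \proper Y0) s.
  rewrite /= !andbT; apply/and4P; split; apply/properP; split;
    try exact: subsetUl.
  - by exists q; rewrite ?inE ?qQ ?orbT.
  - by exists r; rewrite ?inE ?rR ?orbT //= negb_or rP.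
  - by exists u; rewrite ?inE ?uZ ?orbT //= !negb_or uP uQ.
  - by exists v; rewrite ?inE ?vW ?orbT //= !negb_or vP vQ vR.
have [ch cs] := chain_seq so.
have : 5 <= height A.
  rewrite -[5]/(size s) -cs /height.
  apply: (leq_bigmax_cond [set x in s]); rewrite ch andbT powersetE.
  apply/subsetP => Y; rewrite inE !in_cons in_nil orbF.
  have PA := BinA _ PB; have QA := BinA _ QB; have RA := BinA _ RB.
  by case/or4P => [| | |/orP []] /eqP ->; rewrite ?UC.
by rewrite hA.
Qed.
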